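(* Consider $CP(N)$ with rates $\psi(i,j)=2ij$ started from $(N,0,\dots,0)$, and let $n_{k,N}(t)$ be the number of clusters of size $k$ at time $t$. Then for every fixed $t>0$ and fixed $k,l$ with $k\neq l$, as $N\to\infty$: $\mathbb E\,n_{k,N}(t)\to0$, $\operatorname{Var} n_{k,N}(t)\to0$ and $\operatorname{cov}(n_{k,N}(t),n_{l,N}(t))\to0$; while $\mathbb E\,n_{N,N}(t)\to1$, so the probability $p_{coag,N}(t)$ of a single cluster of size $N$ at time $t$ tends to $1$ as $N\to\infty$.
   Context: $CP(N)$ is the continuous-time Markov chain on partitions $\eta=(n_1,\dots,n_N)$ of $N$ ($n_k$ = number of clusters of size $k$, $\sum kn_k=N$) in which any two distinct clusters of sizes $i,j$ merge into one of size $i+j$ at rate $\psi(i,j)$; the transition $\eta\to\eta^{(i,j)}$ has rate $n_in_j\psi(i,j)$ for $i\ne j$ and $\frac{n_i(n_i-1)}2\psi(i,i)$ for $i=j$. *)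

(* Defs.v *)
From Stdlib Require Import Reals List Arith.
Import ListNotations.
Open Scope R_scope.

(* A state eta of CP(N) (a partition of N) is represented as the
   non-increasing list of its cluster sizes; n_k(eta) = number of
   occurrences of k in the list. *)

Fixpoint parts_aux (fuel m n : nat) : list (list nat) :=
  match fuel with
  | O => match n with O => [[]] | _ => [] end
  | S f =>
      match n with
      | O => [[]]
      | _ => flat_map (fun k => map (cons k) (parts_aux f k (n - k)))
                      (seq 1 (Nat.min m n))
      end
  end.

Definition parts (N : nat) : list (list nat) := parts_aux N N N.

Definition ncl (k : nat) (eta : list nat) : nat := count_occ Nat.eq_dec eta k.

Fixpoint remove_one (x : nat) (l : list nat) : list nat :=
  match l with
  | [] => []
  | y :: l' => if Nat.eqb x y then l' else y :: remove_one x l'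
  end.

Fixpoint insert_desc (x : nat) (l : list nat) : list nat :=
  match l with
  | [] => [x]
  | y :: l' => if Nat.leb y x then x :: l else y :: insert_desc x l'
  end.

Definition merge (eta : list nat) (i j : nat) : list nat :=
  insert_desc (i + j) (remove_one j (remove_one i eta)).

(* Rate of eta -> eta^{(i,j)} (for i <= j), with kernel psi. *)
Definition rate (psi : nat -> nat -> R) (eta : list nat) (i j : nat) : R :=
  if Nat.eq_dec i j
  then INR (ncl i eta) * (INR (ncl i eta) - 1) / 2 * psi i i
  else INR (ncl i eta) * INR (ncl j eta) * psi i j.

Definition sumR {A : Type} (l : list A) (f : A -> R) : R :=
  fold_right (fun x acc => f x + acc) 0 l.

Definition sum_pairs (N : nat) (f : nat -> nat -> R) : R :=
  sumR (seq 1 N) (fun i => sumR (seq i (S N - i)) (fun j => f i j)).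

Definition list_eqb (a b : list nat) : bool :=
  if list_eq_dec Nat.eq_dec a b then true else false.

Definition forward_rhs (psi : nat -> nat -> R) (N : nat)
    (p : list nat -> R) (eta' : list nat) : R :=
  sumR (parts N) (fun eta =>
    sum_pairs N (fun i j =>
      if list_eqb (merge eta i j) eta' then p eta * rate psi eta i j else 0))
  - p eta' * sum_pairs N (fun i j => rate psi eta' i j).

(* p : R -> list nat -> R is the law at time t of CP(N) with kernel psi
   started at eta0: it solves the Kolmogorov forward equations on the
   (finite) state space parts N, with initial law delta_{eta0}.
   (This linear ODE has a unique solution, exp(tQ).) *)
Definition is_CP_law (psi : nat -> nat -> R) (N : nat) (eta0 : list nat)
    (p : R -> list nat -> R) : Prop :=
  (forall eta, In eta (parts N) -> p 0 eta = if list_eqb eta eta0 then 1 else 0) /\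
  (forall eta t, In eta (parts N) ->
     derivable_pt_lim (fun s => p s eta) t (forward_rhs psi N (p t) eta)).

(* Initial state (N,0,...,0): N clusters of size 1. *)
Definition monomers (N : nat) : list nat := repeat 1%nat N.

Definition Ex (N : nat) (p : R -> list nat -> R) (t : R) (f : list nat -> R) : R :=
  sumR (parts N) (fun eta => p t eta * f eta).

Definition Var (N : nat) (p : R -> list nat -> R) (t : R) (f : list nat -> R) : R :=
  Ex N p t (fun eta => f eta * f eta) - Ex N p t f * Ex N p t f.

Definition Cov (N : nat) (p : R -> list nat -> R) (t : R) (f g : list nat -> R) : R :=
  Ex N p t (fun eta => f eta * g eta) - Ex N p t f * Ex N p t g.

Definition nk (k : nat) : list nat -> R := fun eta => INR (ncl k eta).

Definition psi_mult (i j : nat) : R := 2 * INR i * INR j.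

(* Main.v *)
Require Import Defs.
From Stdlib Require Import Reals List Arith Lia Lra.
Import ListNotations.

Fixpoint desc_le (m : nat) (l : list nat) : Prop :=
  match l with
  | [] => True
  | x :: l' => (1 <= x <= m)%nat /\ desc_le x l'
  end.

Lemma desc_le_mono m m' l : (m <= m')%nat -> desc_le m l -> desc_le m' l.
Proof. destruct l; simpl; intuition lia. Qed.

Lemma desc_le_sum_zero m l : desc_le m l -> list_sum l = 0%nat -> l = [].
Proof. destruct l; simpl; intuition lia. Qed.

Lemma parts_aux_iff f : forall m n l, (n <= f)%nat ->
  In l (parts_aux f m n) <-> desc_le m l /\ list_sum l = n.
Proof.
  induction f as [|f IH]; intros m n l Hn.
  - assert (n = 0%nat) by lia; subst. simpl. split.
    + intros [<-|[]]. simpl; auto.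
    + intros [H1 H2]. left. symmetry. eapply desc_le_sum_zero; eauto.
  - destruct n as [|n].
    + simpl. split.
      * intros [<-|[]]. simpl; auto.
      * intros [H1 H2]. left. symmetry. eapply desc_le_sum_zero; eauto.
    + cbn [parts_aux]. rewrite in_flat_map. split.
      * intros [k [Hk Hl]]. apply in_seq in Hk. apply in_map_iff in Hl.
        destruct Hl as [l' [<- Hl']]. apply IH in Hl'; [|lia].
        destruct Hl' as [H1 H2]. simpl. split. split; [lia|auto]. lia.
      * intros [H1 H2]. destruct l as [|k l']. simpl in H2; lia.
        simpl in H1, H2. exists k. split. apply in_seq. lia.
        apply in_map_iff. exists l'. split; auto. apply IH. lia. split. tauto. lia.
Qed.

Lemma parts_iff N l : In l (parts N) <-> desc_le N l /\ list_sum l = N.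
Proof. apply parts_aux_iff. lia. Qed.

Lemma NoDup_flat_map {A B} (f : A -> list B) (l : list A) :
  NoDup l -> (forall x, In x l -> NoDup (f x)) ->
  (forall x y z, In x l -> In y l -> x <> y -> In z (f x) -> ~ In z (f y)) ->
  NoDup (flat_map f l).
Proof.
  induction l as [|a l IH]; simpl; intros Hn Hf Hd. constructor.
  inversion Hn; subst. apply NoDup_app; auto.
  apply IH; auto. intros x y z Hx Hy. apply Hd; auto.
  intros z Hz Hz'. apply in_flat_map in Hz'. destruct Hz' as [y [Hy Hzy]].
  apply (Hd a y z); auto. intros ->; contradiction.
Qed.

Lemma NoDup_parts_aux f : forall m n, NoDup (parts_aux f m n).
Proof.
  induction f as [|f IH]; intros m n.
  - destruct n; repeat constructor; simpl; auto.
  - destruct n as [|n]. repeat constructor; simpl; auto.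
    cbn [parts_aux]. apply NoDup_flat_map.
    + apply seq_NoDup.
    + intros k _. apply NoDup_map_NoDup_ForallPairs; auto.
      intros x y _ _ H. injection H; auto.
    + intros x y z _ _ Hxy Hx Hy. apply in_map_iff in Hx, Hy.
      destruct Hx as [a [<- _]]. destruct Hy as [b [Hb _]]. injection Hb. auto.
Qed.

Lemma NoDup_parts N : NoDup (parts N).
Proof. apply NoDup_parts_aux. Qed.

Lemma remove_one_length x l : In x l -> length (remove_one x l) = pred (length l).
Proof.
  induction l as [|y l IH]; simpl; intros H. contradiction.
  destruct (Nat.eqb_spec x y). auto.
  destruct H as [->|H]. congruence. simpl. rewrite IH by auto. destruct l; simpl in *; auto. contradiction.
Qed.

Lemma remove_one_sum x l : In x l -> (list_sum (remove_one x l) + x = list_sum l)%nat.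
Proof.
  induction l as [|y l IH]; simpl; intros H. contradiction.
  destruct (Nat.eqb_spec x y). subst; lia.
  destruct H as [->|H]. congruence. simpl. rewrite <- IH by auto. lia.
Qed.

Lemma remove_one_in z x l : In z (remove_one x l) -> In z l.
Proof.
  induction l as [|y l IH]; simpl; auto.
  destruct (Nat.eqb x y); simpl; intuition.
Qed.

Lemma remove_one_desc m x l : desc_le m l -> desc_le m (remove_one x l).
Proof.
  revert m. induction l as [|y l IH]; intros m; simpl; auto.
  intros [H1 H2]. destruct (Nat.eqb x y). eapply desc_le_mono; [|eauto]; lia.
  simpl. split; auto.
Qed.

Lemma insert_desc_desc m x l : (1 <= x <= m)%nat -> desc_le m l -> desc_le m (insert_desc x l).
Proof.
  revert m. induction l as [|y l IH]; intros m Hx; simpl; auto.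
  intros [H1 H2]. destruct (Nat.leb_spec y x).
  - simpl. split; auto. split; auto. lia.
  - simpl. split; auto. apply IH; auto. lia.
Qed.

Lemma insert_desc_sum x l : list_sum (insert_desc x l) = (x + list_sum l)%nat.
Proof.
  induction l as [|y l IH]; simpl. lia.
  destruct (Nat.leb y x); simpl; lia.
Qed.

Lemma insert_desc_length x l : length (insert_desc x l) = S (length l).
Proof.
  induction l as [|y l IH]; simpl; auto. destruct (Nat.leb y x); simpl; auto.
Qed.

Lemma desc_le_in m l x : desc_le m l -> In x l -> (1 <= x <= m)%nat.
Proof.
  revert m. induction l as [|y l IH]; simpl; intros m H Hi. contradiction.
  destruct H as [H1 H2]. destruct Hi as [->|Hi]. auto.
  specialize (IH _ H2 Hi). lia.
Qed.

Lemma count_pos_in k l : (0 < count_occ Nat.eq_dec l k)%nat -> In k l.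
Proof.
  intros H. destruct (in_dec Nat.eq_dec k l); auto.
  apply (count_occ_not_In Nat.eq_dec) in n. lia.
Qed.

Lemma count_remove_one i j l : In i l ->
  count_occ Nat.eq_dec (remove_one i l) j =
  if Nat.eq_dec i j then pred (count_occ Nat.eq_dec l j) else count_occ Nat.eq_dec l j.
Proof.
  induction l as [|y l IH]; simpl; intros H. contradiction.
  destruct (Nat.eqb_spec i y).
  - subst. destruct (Nat.eq_dec y j); auto.
  - destruct H as [->|H]. congruence. simpl. rewrite IH by auto.
    destruct (Nat.eq_dec y j), (Nat.eq_dec i j); subst; try congruence; simpl; auto.
Qed.

Open Scope R_scope.

Lemma sumR_ext {A} (l : list A) f g :
  (forall x, In x l -> f x = g x) -> sumR l f = sumR l g.
Proof.
  induction l as [|a l IH]; simpl; intros H; auto.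
  rewrite H by auto. rewrite IH by auto. reflexivity.
Qed.

Lemma sumR_plus {A} (l : list A) f g :
  sumR l (fun x => f x + g x) = sumR l f + sumR l g.
Proof. induction l; simpl; lra. Qed.

Lemma sumR_minus {A} (l : list A) f g :
  sumR l (fun x => f x - g x) = sumR l f - sumR l g.
Proof. induction l; simpl; lra. Qed.

Lemma sumR_mult_r {A} (l : list A) f c :
  sumR l f * c = sumR l (fun x => f x * c).
Proof. induction l; simpl; lra. Qed.

Lemma sumR_mult_l {A} (l : list A) f c :
  c * sumR l f = sumR l (fun x => c * f x).
Proof. induction l; simpl; lra. Qed.

Lemma sumR_zero {A} (l : list A) : sumR l (fun _ => 0) = 0.
Proof. induction l; simpl; lra. Qed.

Lemma sumR_swap {A B} (l1 : list A) (l2 : list B) f :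
  sumR l1 (fun a => sumR l2 (fun b => f a b)) =
  sumR l2 (fun b => sumR l1 (fun a => f a b)).
Proof.
  induction l1 as [|a l1 IH]; simpl.
  - rewrite sumR_zero; auto.
  - rewrite IH, <- sumR_plus. reflexivity.
Qed.

Lemma sumR_le {A} (l : list A) f g :
  (forall x, In x l -> f x <= g x) -> sumR l f <= sumR l g.
Proof.
  induction l as [|a l IH]; simpl; intros H. lra.
  specialize (H a (or_introl eq_refl)) as Ha.
  assert (sumR l f <= sumR l g) by (apply IH; auto). lra.
Qed.

Lemma sumR_nonneg {A} (l : list A) f :
  (forall x, In x l -> 0 <= f x) -> 0 <= sumR l f.
Proof.
  intros H. rewrite <- (sumR_zero l). apply sumR_le. auto.
Qed.

Lemma sumR_select_nat (l : list nat) (a : nat) (c : nat -> R) :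
  NoDup l -> In a l ->
  sumR l (fun x => if Nat.eq_dec a x then c x else 0) = c a.
Proof.
  induction l as [|b l IH]; simpl; intros Hn Hi. contradiction.
  inversion Hn; subst.
  destruct (Nat.eq_dec a b) as [->|Hab].
  - rewrite (sumR_ext l _ (fun _ => 0)). rewrite sumR_zero; lra.
    intros x Hx. destruct (Nat.eq_dec b x); subst; auto. contradiction.
  - destruct Hi as [Hi|Hi]. congruence. rewrite IH; auto. lra.
Qed.

Lemma sumR_select_list (l : list (list nat)) (a : list nat) (c : list nat -> R) :
  NoDup l -> In a l ->
  sumR l (fun x => if list_eqb a x then c x else 0) = c a.
Proof.
  induction l as [|b l IH]; simpl; intros Hn Hi. contradiction.
  inversion Hn; subst. unfold list_eqb at 1.
  destruct (list_eq_dec Nat.eq_dec a b) as [->|Hab].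
  - rewrite (sumR_ext l _ (fun _ => 0)). rewrite sumR_zero; lra.
    intros x Hx. unfold list_eqb. destruct (list_eq_dec Nat.eq_dec b x); subst; auto. contradiction.
  - destruct Hi as [Hi|Hi]. congruence. rewrite IH; auto. lra.
Qed.

Lemma list_eqb_sym a b : list_eqb a b = list_eqb b a.
Proof.
  unfold list_eqb. destruct (list_eq_dec Nat.eq_dec a b), (list_eq_dec Nat.eq_dec b a); congruence.
Qed.

Lemma sumR_select_list' (l : list (list nat)) (a : list nat) (c : list nat -> R) :
  NoDup l -> In a l ->
  sumR l (fun x => if list_eqb x a then c x else 0) = c a.
Proof.
  intros. rewrite <- (sumR_select_list l a c) by auto. apply sumR_ext.
  intros; rewrite list_eqb_sym; auto.
Qed.

Fixpoint PS (l : list nat) (f : nat -> nat -> R) : R :=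
  match l with
  | [] => 0
  | a :: l' => sumR (a :: l') (f a) + PS l' f
  end.

Lemma PS_seq s n f :
  sumR (seq s n) (fun i => sumR (seq i (s + n - i)) (fun j => f i j)) = PS (seq s n) f.
Proof.
  revert s. induction n as [|n IH]; intros s; simpl. auto.
  replace (s + S n - s)%nat with (S n) by lia. simpl.
  rewrite <- IH. f_equal.
  apply sumR_ext. intros i _. replace (S s + n - i)%nat with (s + S n - i)%nat by lia. auto.
Qed.

Lemma sum_pairs_PS N f : sum_pairs N f = PS (seq 1 N) f.
Proof. unfold sum_pairs. rewrite <- PS_seq. reflexivity. Qed.

Lemma PS_sym l f : (forall i j, f i j = f j i) ->
  2 * PS l f = sumR l (fun i => sumR l (f i)) + sumR l (fun i => f i i).
Proof.
  intros Hs. induction l as [|a l IH]; simpl. lra.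
  rewrite (sumR_ext l (fun x => f x a + sumR l (f x)) (fun x => f a x + sumR l (f x))).
  2:{ intros; rewrite Hs; auto. }
  rewrite sumR_plus. lra.
Qed.

Lemma PS_ext l f g : (forall i j, f i j = g i j) -> PS l f = PS l g.
Proof.
  intros H. induction l as [|a l IH]; simpl; auto. rewrite IH.
  f_equal. f_equal. apply H. apply sumR_ext; auto.
Qed.

Lemma PS_nonneg l f : (forall i j, 0 <= f i j) -> 0 <= PS l f.
Proof.
  intros H. induction l as [|a l IH]; simpl. lra.
  assert (0 <= sumR l (f a)) by (apply sumR_nonneg; auto).
  specialize (H a a). lra.
Qed.

Lemma sum_pairs_nonneg N f : (forall i j, 0 <= f i j) -> 0 <= sum_pairs N f.
Proof. intros; rewrite sum_pairs_PS; apply PS_nonneg; auto. Qed.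

Lemma PS_swap {A} l (m : list A) f :
  PS l (fun i j => sumR m (fun x => f i j x)) = sumR m (fun x => PS l (fun i j => f i j x)).
Proof.
  induction l as [|a l IH]; cbn [PS]. rewrite sumR_zero; auto.
  rewrite IH. rewrite sumR_plus. f_equal. apply sumR_swap.
Qed.

Lemma PS_plus l f g : PS l (fun i j => f i j + g i j) = PS l f + PS l g.
Proof.
  induction l as [|a l IH]; cbn [PS]. lra. rewrite IH, sumR_plus. lra.
Qed.

Lemma PS_mult_l l f c : c * PS l f = PS l (fun i j => c * f i j).
Proof.
  induction l as [|a l IH]; cbn [PS]. lra. rewrite <- IH, <- sumR_mult_l. lra.
Qed.

Lemma psi_mult_nonneg i j : 0 <= psi_mult i j.
Proof. unfold psi_mult. pose proof (pos_INR i); pose proof (pos_INR j). nra. Qed.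

Lemma nat_nn1 (n : nat) : 0 <= INR n * (INR n - 1).
Proof.
  destruct n. simpl; lra. rewrite S_INR. pose proof (pos_INR n). nra.
Qed.

Lemma rate_nonneg eta i j : 0 <= rate psi_mult eta i j.
Proof.
  unfold rate. pose proof (psi_mult_nonneg i j). pose proof (psi_mult_nonneg i i).
  destruct (Nat.eq_dec i j).
  - pose proof (nat_nn1 (ncl i eta)). apply Rmult_le_pos; auto. lra.
  - pose proof (pos_INR (ncl i eta)); pose proof (pos_INR (ncl j eta)).
    apply Rmult_le_pos; auto. apply Rmult_le_pos; auto.
Qed.

Lemma rate_nz eta i j : rate psi_mult eta i j <> 0 ->
  In i eta /\ In j (remove_one i eta).
Proof.
  unfold rate, ncl. intros H.
  destruct (Nat.eq_dec i j) as [<-|Hij].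
  - destruct (count_occ Nat.eq_dec eta i) as [|[|c]] eqn:E.
    + exfalso; apply H; simpl; lra.
    + exfalso; apply H; simpl; lra.
    + assert (Hi : In i eta) by (apply count_pos_in; lia).
      split; auto. apply count_pos_in. rewrite count_remove_one by auto.
      destruct (Nat.eq_dec i i); [|congruence]. lia.
  - destruct (count_occ Nat.eq_dec eta i) eqn:Ei.
    { exfalso; apply H; simpl; lra. }
    destruct (count_occ Nat.eq_dec eta j) eqn:Ej.
    { exfalso; apply H; simpl; lra. }
    assert (Hi : In i eta) by (apply count_pos_in; lia).
    split; auto. apply count_pos_in. rewrite count_remove_one by auto.
    destruct (Nat.eq_dec i j); [congruence|]. lia.
Qed.

Lemma merge_length eta i j : In i eta -> In j (remove_one i eta) ->
  S (length (merge eta i j)) = length eta.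
Proof.
  intros Hi Hj. unfold merge. rewrite insert_desc_length.
  rewrite (remove_one_length j) by auto.
  pose proof (remove_one_length i eta Hi).
  destruct (remove_one i eta) eqn:E. contradiction. simpl in *. lia.
Qed.

Lemma merge_parts N eta i j : In eta (parts N) -> In i eta -> In j (remove_one i eta) ->
  In (merge eta i j) (parts N).
Proof.
  intros He Hi Hj. apply parts_iff in He. destruct He as [Hd Hs].
  apply parts_iff. unfold merge.
  pose proof (remove_one_sum i eta Hi) as S1.
  pose proof (remove_one_sum j _ Hj) as S2.
  pose proof (desc_le_in _ _ _ Hd (remove_one_in _ _ _ Hj)).
  split.
  - apply insert_desc_desc. lia. apply remove_one_desc, remove_one_desc; auto.
  - rewrite insert_desc_sum. lia.
Qed.

Definition a_ (eta : list nat) (i : nat) : R := INR (ncl i eta).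

Lemma rate_sym eta i j : rate psi_mult eta i j = rate psi_mult eta j i.
Proof.
  unfold rate, psi_mult. destruct (Nat.eq_dec i j), (Nat.eq_dec j i); subst; try congruence; ring.
Qed.

Lemma rate_decomp eta i j : rate psi_mult eta i j =
  2 * (INR i * a_ eta i) * (INR j * a_ eta j) -
  (if Nat.eq_dec i j then INR i * INR i * (a_ eta i * a_ eta i + a_ eta i) else 0).
Proof.
  unfold rate, psi_mult, a_. destruct (Nat.eq_dec i j); subst; field.
Qed.

Lemma sum_weighted N eta h : (forall x, In x eta -> (1 <= x <= N)%nat) ->
  sumR (seq 1 N) (fun i => h i * a_ eta i) = sumR eta h.
Proof.
  induction eta as [|x eta IH]; intros Hin.
  - unfold a_, ncl. simpl. rewrite (sumR_ext _ _ (fun _ => 0)). apply sumR_zero.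
    intros; simpl; ring.
  - rewrite (sumR_ext _ _ (fun i => h i * a_ eta i + (if Nat.eq_dec x i then h i else 0))).
    + rewrite sumR_plus, IH by (intros; apply Hin; simpl; auto).
      rewrite sumR_select_nat. simpl; ring. apply seq_NoDup.
      apply in_seq. specialize (Hin x (or_introl eq_refl)). lia.
    + intros i _. unfold a_, ncl. simpl.
      destruct (Nat.eq_dec x i); [rewrite S_INR|]; ring.
Qed.

Lemma F_formula N eta : (forall x, In x eta -> (1 <= x <= N)%nat) ->
  sum_pairs N (rate psi_mult eta) =
  sumR eta INR * sumR eta INR - sumR eta (fun x => INR x * INR x).
Proof.
  intros Hin.
  assert (H2 := PS_sym (seq 1 N) (rate psi_mult eta) (rate_sym eta)).
  rewrite <- sum_pairs_PS in H2. set (l := seq 1 N) in H2.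
  rewrite (sumR_ext l (fun i => sumR l (rate psi_mult eta i))
    (fun i => sumR l (fun j => 2 * (INR i * a_ eta i) * (INR j * a_ eta j)) -
              INR i * INR i * (a_ eta i * a_ eta i + a_ eta i))) in H2.
  2:{ intros i Hi. rewrite (sumR_ext l _ (fun j => 2 * (INR i * a_ eta i) * (INR j * a_ eta j) -
          (if Nat.eq_dec i j then INR i * INR i * (a_ eta i * a_ eta i + a_ eta i) else 0))).
      rewrite sumR_minus. rewrite (sumR_select_nat l i (fun _ => _)); auto.
      apply seq_NoDup. intros j _; apply rate_decomp. }
  rewrite (sumR_ext l (fun i => rate psi_mult eta i i)
    (fun i => INR i * INR i * (a_ eta i * a_ eta i - a_ eta i))) in H2.
  2:{ intros i _. unfold rate, psi_mult, a_. destruct (Nat.eq_dec i i); [|congruence]. field. }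
  rewrite sumR_minus in H2.
  rewrite (sumR_ext l (fun i => sumR l (fun j => 2 * (INR i * a_ eta i) * (INR j * a_ eta j)))
     (fun i => 2 * (INR i * a_ eta i) * sumR l (fun j => INR j * a_ eta j))) in H2.
  2:{ intros i _. rewrite sumR_mult_l. auto. }
  rewrite <- (sumR_mult_r l (fun i => 2 * (INR i * a_ eta i))) in H2.
  rewrite <- (sumR_mult_l l (fun i => INR i * a_ eta i)) in H2.
  unfold l in H2. rewrite (sum_weighted N eta INR Hin) in H2. fold l in H2.
  rewrite (sumR_ext l (fun i => INR i * INR i * (a_ eta i * a_ eta i + a_ eta i))
    (fun i => INR i * INR i * (a_ eta i * a_ eta i) + INR i * INR i * a_ eta i)) in H2 by (intros; ring).
  rewrite (sumR_ext l (fun i => INR i * INR i * (a_ eta i * a_ eta i - a_ eta i))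
    (fun i => INR i * INR i * (a_ eta i * a_ eta i) - INR i * INR i * a_ eta i)) in H2 by (intros; ring).
  rewrite sumR_plus, sumR_minus in H2.
  unfold l in H2. rewrite (sum_weighted N eta (fun i => INR i * INR i) Hin) in H2.
  lra.
Qed.

Lemma list_ineq eta : (forall x, In x eta -> (1 <= x)%nat) ->
  sumR eta INR * sumR eta INR - sumR eta (fun x => INR x * INR x) >=
  sumR eta INR * (INR (length eta) - 1) /\ sumR eta INR >= INR (length eta).
Proof.
  induction eta as [|x eta IH]; intros H. simpl; lra.
  destruct IH as [I1 I2]. intros; apply H; simpl; auto.
  assert (Hx : 1 <= INR x) by (apply (le_INR 1); apply H; simpl; auto).
  simpl length. rewrite S_INR. simpl sumR.
  pose proof (pos_INR (length eta)). split; nra.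
Qed.

Lemma F_lower N eta : In eta (parts N) ->
  sum_pairs N (rate psi_mult eta) >= INR N * (INR (length eta) - 1).
Proof.
  intros He. apply parts_iff in He. destruct He as [Hd Hs].
  assert (Hin : forall x, In x eta -> (1 <= x <= N)%nat) by (intros; eapply desc_le_in; eauto).
  rewrite F_formula by auto.
  assert (sumR eta INR = INR N).
  { rewrite <- Hs. clear. induction eta; simpl; auto. rewrite plus_INR; lra. }
  destruct (list_ineq eta) as [I1 I2]. intros x Hx; apply Hin; auto.
  rewrite <- H; auto.
Qed.

Lemma PS_minus l f g : PS l (fun i j => f i j - g i j) = PS l f - PS l g.
Proof.
  induction l as [|a l IH]; cbn [PS]. lra. rewrite IH, sumR_minus. lra.
Qed.

Lemma PS_mult_r l f c : PS l f * c = PS l (fun i j => f i j * c).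
Proof.
  rewrite Rmult_comm, PS_mult_l. apply PS_ext. intros; ring.
Qed.

Lemma gen_id N (pt w : list nat -> R) :
  sumR (parts N) (fun e' => forward_rhs psi_mult N pt e' * w e') =
  sumR (parts N) (fun e => pt e * sum_pairs N (fun i j => rate psi_mult e i j * (w (merge e i j) - w e))).
Proof.
  set (P := parts N). set (l := seq 1 N).
  unfold forward_rhs. fold P.
  rewrite (sumR_ext P _ (fun e' =>
     sumR P (fun e => PS l (fun i j => (if list_eqb (merge e i j) e' then pt e * rate psi_mult e i j else 0) * w e'))
     - pt e' * w e' * PS l (rate psi_mult e'))).
  2:{ intros e' _. rewrite !sum_pairs_PS. fold l. rewrite Rmult_minus_distr_r.
      f_equal.
      - rewrite sumR_mult_r. apply sumR_ext. intros. rewrite sum_pairs_PS. apply PS_mult_r.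
      - replace (fun i j : nat => rate psi_mult e' i j) with (rate psi_mult e') by reflexivity; ring. }
  rewrite sumR_minus. rewrite sumR_swap.
  rewrite (sumR_ext P (fun e => sumR P (fun e' => PS l (fun i j => (if list_eqb (merge e i j) e' then pt e * rate psi_mult e i j else 0) * w e')))
    (fun e => PS l (fun i j => pt e * rate psi_mult e i j * w (merge e i j)))).
  2:{ intros e He. rewrite <- PS_swap. apply PS_ext. intros i j.
      destruct (Req_dec (rate psi_mult e i j) 0) as [H0|H0].
      - rewrite H0. rewrite (sumR_ext P _ (fun _ => 0)). rewrite sumR_zero; ring.
        intros; destruct (list_eqb _ _); ring.
      - destruct (rate_nz _ _ _ H0) as [Hi Hj].
        rewrite (sumR_ext P _ (fun e' => if list_eqb (merge e i j) e' then pt e * rate psi_mult e i j * w e' else 0)).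
        rewrite (sumR_select_list P (merge e i j) (fun e' => pt e * rate psi_mult e i j * w e')).
        auto. apply NoDup_parts. apply merge_parts; auto.
        intros; destruct (list_eqb _ _); ring. }
  rewrite <- sumR_minus. apply sumR_ext. intros e _.
  rewrite sum_pairs_PS. fold l. rewrite (PS_mult_l l _ (pt e)).
  rewrite (PS_ext l (fun i j => pt e * (rate psi_mult e i j * (w (merge e i j) - w e))) (fun i j => pt e * rate psi_mult e i j * w (merge e i j) - rate psi_mult e i j * (pt e * w e))).
  2:{ intros. cbv beta. ring. }
  rewrite PS_minus. rewrite <- PS_mult_r. ring.
Qed.

Lemma deriv_sumR {A} (l : list A) (f : R -> A -> R) (d : A -> R) t :
  (forall x, In x l -> derivable_pt_lim (fun s => f s x) t (d x)) ->
  derivable_pt_lim (fun s => sumR l (f s)) t (sumR l d).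
Proof.
  induction l as [|a l IH]; simpl; intros H.
  - apply (derivable_pt_lim_const 0).
  - apply (derivable_pt_lim_plus (fun s => f s a) (fun s => sumR l (f s))); auto.
Qed.

Lemma mono (f d : R -> R) :
  (forall s, 0 <= s -> derivable_pt_lim f s (d s)) ->
  (forall s, 0 <= s -> 0 <= d s) -> forall t, 0 <= t -> f 0 <= f t.
Proof.
  intros Hd Hp t Ht. destruct (Req_dec t 0) as [->|Hne]. lra.
  destruct (MVT_cor2 f d 0 t) as [c [Hc1 Hc2]]. lra.
  intros c Hc. apply Hd. lra.
  assert (0 <= d c) by (apply Hp; lra). nra.
Qed.

Lemma deriv_exp_lin q s : derivable_pt_lim (fun s => exp (q * s)) s (q * exp (q * s)).
Proof.
  assert (H := derivable_pt_lim_comp (fun s => q * s) exp s q (exp (q * s))).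
  rewrite Rmult_comm. apply H.
  - assert (H1 := derivable_pt_lim_scal id q s 1 (derivable_pt_lim_id s)).
    rewrite Rmult_1_r in H1. exact H1.
  - apply derivable_pt_lim_exp.
Qed.

Lemma Un_cv_squeeze (x b : nat -> R) l N0 :
  (forall n, (n >= N0)%nat -> Rabs (x n - l) <= b n) -> Un_cv b 0 -> Un_cv x l.
Proof.
  intros H Hb eps He. destruct (Hb eps He) as [N1 HN1].
  exists (max N0 N1). intros n Hn. unfold Rdist.
  specialize (HN1 n ltac:(lia)). unfold Rdist in HN1.
  specialize (H n ltac:(lia)). rewrite Rminus_0_r in HN1.
  pose proof (Rle_abs (b n)). lra.
Qed.

Lemma a_cv t : 0 < t -> Un_cv (fun N => INR N * INR N * exp (- (INR N * t))) 0.
Proof.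
  intros Ht eps He.
  destruct (INR_archimed (eps * (t*t*t)) 27) as [M HM].
  { apply Rmult_lt_0_compat; auto. apply Rmult_lt_0_compat; nra. }
  exists (S M). intros n Hn. unfold Rdist. rewrite Rminus_0_r.
  assert (HnM : INR M < INR n) by (apply lt_INR; lia).
  assert (Hn0 : 0 < INR n) by (pose proof (pos_INR M); lra).
  set (x := INR n * t / 3).
  assert (Hx : 0 < x) by (unfold x; nra).
  assert (E : exp (INR n * t) = exp x * exp x * exp x).
  { rewrite <- !exp_plus. f_equal. unfold x. field. }
  assert (E1 : x <= exp x) by (pose proof (exp_ineq1_le x); lra).
  assert (E3 : x * x * x <= exp (INR n * t)).
  { rewrite E. apply Rmult_le_compat; try nra. }
  rewrite exp_Ropp. rewrite Rabs_right.
  2:{ apply Rle_ge. pose proof (exp_pos (INR n * t)). apply Rmult_le_pos. nra.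
  left; apply Rinv_0_lt_compat; auto. }
  assert (Hpos : 0 < exp (INR n * t)) by apply exp_pos.
  apply (Rmult_lt_reg_r (exp (INR n * t))); auto.
  rewrite Rmult_assoc, Rinv_l by lra. rewrite Rmult_1_r.
  assert (eps * (x*x*x) * 27 = eps * (t*t*t) * INR n * (INR n * INR n)) by (unfold x; field).
  assert (eps * (t * t * t) * INR n > 27).
  { assert (0 < eps * (t*t*t)) by (repeat apply Rmult_lt_0_compat; lra). set (c := eps * (t*t*t)) in *.
    assert (c * INR M < c * INR n) by (apply Rmult_lt_compat_l; auto). lra. }
  assert (eps * (x*x*x) <= eps * exp (INR n * t)) by (apply Rmult_le_compat_l; lra).
  assert (27 * (INR n * INR n) < eps * (t * t * t) * INR n * (INR n * INR n)).
  { apply Rmult_lt_compat_r. nra. lra. }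
  lra.
Qed.

Lemma deriv_mult_const (f : R -> R) c x l :
  derivable_pt_lim f x l -> derivable_pt_lim (fun y => f y * c) x (l * c).
Proof.
  intros H. assert (H2 := derivable_pt_lim_mult f (fct_cte c) x l 0 H (derivable_pt_lim_const c x)).
  unfold fct_cte in H2. replace (l * c) with (l * c + f x * 0) by ring. exact H2.
Qed.

Lemma deriv_Ew N p (H : is_CP_law psi_mult N (monomers N) p) w s :
  derivable_pt_lim (fun s => sumR (parts N) (fun e => p s e * w e)) s
   (sumR (parts N) (fun e => p s e * sum_pairs N (fun i j => rate psi_mult e i j * (w (merge e i j) - w e)))).
Proof.
  rewrite <- gen_id. apply (deriv_sumR (parts N) (fun s e => p s e * w e)).
  intros e He. apply (deriv_mult_const (fun s => p s e)). apply H; auto.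
Qed.

Lemma parts_len N e : In e (parts N) -> (length e <= N)%nat /\ (N >= 1 -> length e >= 1)%nat.
Proof.
  intros He. apply parts_iff in He. destruct He as [Hd Hs]. subst N.
  assert (forall m, desc_le m e -> (length e <= list_sum e)%nat).
  { clear. induction e as [|x e IH]; simpl; intros m Hm; auto. destruct Hm as [H1 H2].
    specialize (IH _ H2). lia. }
  specialize (H _ Hd). split; auto. intros. destruct e; simpl in *; lia.
Qed.

Lemma positivity N p (H : is_CP_law psi_mult N (monomers N) p) :
  forall e t, In e (parts N) -> 0 <= t -> 0 <= p t e.
Proof.
  assert (Step : forall eta, In eta (parts N) ->
    (forall e2, In e2 (parts N) -> length e2 = S (length eta) -> forall s, 0 <= s -> 0 <= p s e2) ->
    forall t, 0 <= t -> 0 <= p t eta).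
  { intros eta Heta IH t Ht.
    set (q := sum_pairs N (rate psi_mult eta)).
    set (I := fun s => sumR (parts N) (fun e => sum_pairs N (fun i j =>
          if list_eqb (merge e i j) eta then p s e * rate psi_mult e i j else 0))).
    assert (HI : forall s, 0 <= s -> 0 <= I s).
    { intros s Hs. unfold I. apply sumR_nonneg. intros e He. apply sum_pairs_nonneg.
      intros i j. unfold list_eqb. destruct (list_eq_dec Nat.eq_dec (merge e i j) eta) as [Hm|]; [|lra].
      destruct (Req_dec (rate psi_mult e i j) 0) as [H0|H0]. rewrite H0; lra.
      destruct (rate_nz _ _ _ H0) as [Hi Hj].
      pose proof (merge_length _ _ _ Hi Hj) as HL. rewrite Hm in HL.
      apply Rmult_le_pos. apply IH; auto. apply rate_nonneg. }
    assert (Hd : forall s, derivable_pt_lim (fun s => p s eta * exp (q * s)) s (I s * exp (q * s))).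
    { intros s. assert (H1 := derivable_pt_lim_mult (fun s => p s eta) (fun s => exp (q * s)) s _ _
        (proj2 H eta s Heta) (deriv_exp_lin q s)).
      replace (I s * exp (q * s)) with
        (forward_rhs psi_mult N (p s) eta * exp (q * s) + p s eta * (q * exp (q * s))).
      exact H1. unfold forward_rhs, I, q. cbv beta. change (fun i j => rate psi_mult eta i j) with (rate psi_mult eta). ring. }
    assert (Hm := mono _ _ (fun s _ => Hd s) (fun s Hs => Rmult_le_pos _ _ (HI s Hs) (Rlt_le _ _ (exp_pos _))) t Ht).
    simpl in Hm. rewrite (proj1 H eta Heta) in Hm.
    assert (0 <= p t eta * exp (q * t)).
    { eapply Rle_trans; [|exact Hm]. destruct (list_eqb eta (monomers N)); rewrite Rmult_0_r, exp_0; lra. }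
    pose proof (exp_pos (q * t)). nra. }
  assert (Ind : forall n e, (N - length e <= n)%nat -> In e (parts N) -> forall t, 0 <= t -> 0 <= p t e).
  { induction n as [|n IHn]; intros e Hn He; apply Step; auto; intros e2 He2 Hl.
    - pose proof (parts_len _ _ He2). lia.
    - apply IHn; auto. pose proof (parts_len _ _ He2). lia. }
  intros e t He Ht. apply (Ind (N - length e)%nat); auto.
Qed.

Lemma monomers_parts N : In (monomers N) (parts N).
Proof.
  apply parts_iff. unfold monomers. split.
  - destruct N. simpl; auto. simpl. split. lia.
    clear. induction N; simpl; auto.
  - induction N; simpl; auto.
Qed.

Lemma single_parts N : (N >= 1)%nat -> In [N] (parts N).
Proof. intros. apply parts_iff. simpl. split. split; auto; lia. lia. Qed.

Lemma const_after N p (H : is_CP_law psi_mult N (monomers N) p) (f : R -> R) :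
  (forall s, derivable_pt_lim f s 0) -> forall t, 0 <= t -> f t = f 0.
Proof.
  intros Hd t Ht. destruct (Req_dec t 0) as [->|]. auto.
  destruct (MVT_cor2 f (fun _ => 0) 0 t) as [c [Hc _]]. lra. intros; auto. lra.
Qed.

Lemma E0 N p (H : is_CP_law psi_mult N (monomers N) p) w :
  sumR (parts N) (fun e => p 0 e * w e) = w (monomers N).
Proof.
  rewrite (sumR_ext _ _ (fun e => if list_eqb e (monomers N) then w e else 0)).
  apply sumR_select_list'. apply NoDup_parts. apply monomers_parts.
  intros e He. rewrite (proj1 H e He). destruct (list_eqb _ _); ring.
Qed.

Lemma PS_zero l : PS l (fun _ _ => 0) = 0.
Proof. induction l; cbn [PS]; auto. rewrite IHl, sumR_zero. ring. Qed.

Lemma mass N p (H : is_CP_law psi_mult N (monomers N) p) t : 0 <= t ->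
  sumR (parts N) (fun e => p t e * 1) = 1.
Proof.
  intros Ht. rewrite (const_after N p H (fun s => sumR (parts N) (fun e => p s e * 1))); auto.
  rewrite E0 with (p := p); auto.
  intros s. assert (D := deriv_Ew N p H (fun _ => 1) s).
  rewrite (sumR_ext _ _ (fun _ => 0)) in D. rewrite sumR_zero in D. exact D.
  intros e _. rewrite (sum_pairs_PS). rewrite (PS_ext _ _ (fun _ _ => 0)).
  rewrite PS_zero. ring. intros; ring.
Qed.

Definition gfun (e : list nat) : R := INR (length e) - 1.

Lemma Eg_deriv_val N p (H : is_CP_law psi_mult N (monomers N) p) s :
  sumR (parts N) (fun e => p s e * sum_pairs N (fun i j => rate psi_mult e i j * (gfun (merge e i j) - gfun e)))
  = - sumR (parts N) (fun e => p s e * sum_pairs N (rate psi_mult e)).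
Proof.
  rewrite (sumR_ext _ _ (fun e => -1 * (p s e * sum_pairs N (rate psi_mult e)))).
  rewrite <- sumR_mult_l. ring.
  intros e _. rewrite !sum_pairs_PS.
  rewrite (PS_ext _ (fun i j => rate psi_mult e i j * (gfun (merge e i j) - gfun e)) (fun i j => -1 * rate psi_mult e i j)).
  rewrite <- PS_mult_l. ring.
  intros i j. destruct (Req_dec (rate psi_mult e i j) 0) as [H0|H0]. rewrite H0; ring.
  destruct (rate_nz _ _ _ H0) as [Hi Hj]. pose proof (merge_length _ _ _ Hi Hj) as HL.
  unfold gfun. rewrite <- HL. rewrite S_INR. ring.
Qed.

Lemma Eg_bound N p (H : is_CP_law psi_mult N (monomers N) p) t : 0 <= t ->
  sumR (parts N) (fun e => p t e * gfun e) <= (INR N - 1) * exp (- (INR N * t)).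
Proof.
  intros Ht.
  set (k := fun s => - (sumR (parts N) (fun e => p s e * gfun e) * exp (INR N * s))).
  assert (Hd : forall s, derivable_pt_lim k s
    (- ((- sumR (parts N) (fun e => p s e * sum_pairs N (rate psi_mult e))) * exp (INR N * s)
      + sumR (parts N) (fun e => p s e * gfun e) * (INR N * exp (INR N * s))))).
  { intros s. unfold k. apply derivable_pt_lim_opp.
    rewrite <- (Eg_deriv_val N p H s).
    apply (derivable_pt_lim_mult (fun s => sumR (parts N) (fun e => p s e * gfun e)) (fun s => exp (INR N * s))).
    apply deriv_Ew; auto. apply deriv_exp_lin. }
  assert (Hm := mono k _ (fun s _ => Hd s)).
  assert (Hm2 : k 0 <= k t).
  { apply Hm; auto. intros s Hs.
    assert (sumR (parts N) (fun e => p s e * gfun e) * INR N <=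
            sumR (parts N) (fun e => p s e * sum_pairs N (rate psi_mult e))).
    { rewrite sumR_mult_r. apply sumR_le. intros e He.
      pose proof (F_lower N e He). pose proof (positivity N p H e s He Hs).
      unfold gfun. nra. }
    pose proof (exp_pos (INR N * s)). nra. }
  unfold k in Hm2. rewrite E0 with (p := p) in Hm2 by auto.
  rewrite Rmult_0_r, exp_0 in Hm2. unfold gfun, monomers in Hm2. rewrite repeat_length in Hm2.
  rewrite exp_Ropp. pose proof (exp_pos (INR N * t)).
  apply (Rmult_le_reg_r (exp (INR N * t))); auto.
  rewrite Rmult_assoc, Rinv_l by lra. unfold gfun. lra.
Qed.

Lemma len_le_sum m l : desc_le m l -> (length l <= list_sum l)%nat.
Proof.
  revert m. induction l as [|x l IH]; simpl; intros m Hm; auto.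
  destruct Hm as [H1 H2]. specialize (IH _ H2). lia.
Qed.

Lemma single_or_two N e : (N >= 1)%nat -> In e (parts N) ->
  e = [N] \/ ((length e >= 2)%nat /\ ~ In N e).
Proof.
  intros HN He. pose proof (parts_len N e He) as [L1 L2].
  apply parts_iff in He. destruct He as [Hd Hs].
  destruct e as [|x [|y e]]. simpl in L2; lia.
  - left. simpl in Hs. f_equal. lia.
  - right. split. simpl; lia. intros Hi.
    pose proof (remove_one_sum N _ Hi) as S1.
    assert (Hr : desc_le N (remove_one N (x :: y :: e))) by (apply remove_one_desc; auto).
    pose proof (len_le_sum _ _ Hr) as S2.
    rewrite remove_one_length in S2 by auto. simpl length in S2. lia.
Qed.

Lemma nkN_val N e : (N >= 1)%nat -> In e (parts N) ->
  nk N e = if list_eqb e [N] then 1 else 0.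
Proof.
  intros HN He. unfold nk, ncl, list_eqb.
  destruct (single_or_two N e HN He) as [->|[_ Hn]].
  - destruct (list_eq_dec Nat.eq_dec [N] [N]); [|congruence]. simpl.
    destruct (Nat.eq_dec N N); [|congruence]. simpl; ring.
  - destruct (list_eq_dec Nat.eq_dec e [N]). subst. simpl in Hn. tauto.
    apply (count_occ_not_In Nat.eq_dec) in Hn. rewrite Hn. auto.
Qed.

Lemma gfun_nonneg N e : (N >= 1)%nat -> In e (parts N) -> 0 <= gfun e.
Proof.
  intros HN He. pose proof (parts_len N e He) as [_ L2]. unfold gfun.
  specialize (L2 HN). apply le_INR in L2. simpl in L2. lra.
Qed.

Lemma nk_bound N k e : (N >= 1)%nat -> In e (parts N) -> k <> N ->
  0 <= nk k e <= 2 * gfun e.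
Proof.
  intros HN He Hk. unfold nk, ncl. split. apply pos_INR.
  destruct (single_or_two N e HN He) as [->|[L _]].
  - unfold gfun. simpl. destruct (Nat.eq_dec N k). congruence. simpl; lra.
  - pose proof (count_occ_bound Nat.eq_dec k e). apply le_INR in H.
    apply le_INR in L. unfold gfun. simpl in L. lra.
Qed.

Lemma nk_le_N N k e : In e (parts N) -> 0 <= nk k e <= INR N.
Proof.
  intros He. unfold nk, ncl. split. apply pos_INR. apply le_INR.
  pose proof (count_occ_bound Nat.eq_dec k e). pose proof (parts_len N e He). lia.
Qed.

Lemma nkN_lower N e : (N >= 1)%nat -> In e (parts N) -> 1 - gfun e <= nk N e.
Proof.
  intros HN He. rewrite nkN_val by auto.
  destruct (single_or_two N e HN He) as [->|[L _]].
  - unfold list_eqb. destruct (list_eq_dec Nat.eq_dec [N] [N]); [|congruence].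
    unfold gfun; simpl; lra.
  - pose proof (gfun_nonneg N e HN He). destruct (list_eqb e [N]). lra. unfold gfun in *. apply le_INR in L. simpl in L. lra.
Qed.

Section PerN.
Variable N : nat.
Variable p : R -> list nat -> R.
Hypothesis H : is_CP_law psi_mult N (monomers N) p.
Hypothesis HN : (N >= 1)%nat.
Variable t : R.
Hypothesis Ht : 0 < t.

Let Eg := sumR (parts N) (fun e => p t e * gfun e).
Let a := INR N * INR N * exp (- (INR N * t)).

Lemma pos_t e : In e (parts N) -> 0 <= p t e.
Proof. intros; apply (positivity N p H); auto; lra. Qed.

Lemma Eg_a : 0 <= Eg <= a /\ INR N * Eg <= a.
Proof.
  assert (B := Eg_bound N p H t ltac:(lra)). fold Eg in B.
  assert (0 <= Eg).
  { apply sumR_nonneg. intros e He. apply Rmult_le_pos. apply pos_t; auto. apply gfun_nonneg with N; auto. }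
  pose proof (exp_pos (- (INR N * t))). apply le_INR in HN. simpl in HN. unfold a.
  assert (INR N - 1 <= INR N * INR N) by nra.
  split. split; auto. nra.
  assert (INR N * (INR N - 1) * exp (- (INR N * t)) <= INR N * INR N * exp (- (INR N * t))) by nra.
  nra.
Qed.

Lemma mass_t : sumR (parts N) (fun e => p t e * 1) = 1.
Proof. apply mass; auto; lra. Qed.

Lemma Ex_le f g : (forall e, In e (parts N) -> f e <= g e) -> Ex N p t f <= Ex N p t g.
Proof.
  intros Hfg. unfold Ex. apply sumR_le. intros e He. apply Rmult_le_compat_l. apply pos_t; auto. auto.
Qed.

Lemma Ex_scal c f : Ex N p t (fun e => c * f e) = c * Ex N p t f.
Proof. unfold Ex. rewrite sumR_mult_l. apply sumR_ext. intros; ring. Qed.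

Lemma Ex_nk k : k <> N -> 0 <= Ex N p t (nk k) <= 2 * a.
Proof.
  intros Hk. destruct Eg_a as [[E1 E2] E3]. split.
  - apply Rle_trans with (Ex N p t (fun _ => 0)). unfold Ex. rewrite (sumR_ext _ _ (fun _ => 0)), sumR_zero. lra.
    intros; ring. apply Ex_le. intros e He. apply nk_bound with N; auto.
  - apply Rle_trans with (Ex N p t (fun e => 2 * gfun e)). apply Ex_le. intros e He. apply nk_bound with N; auto.
    rewrite Ex_scal. unfold Ex. fold Eg. lra.
Qed.

Lemma Ex_nkl k l : k <> N -> 0 <= Ex N p t (fun e => nk k e * nk l e) <= 2 * a.
Proof.
  intros Hk. destruct Eg_a as [[E1 E2] E3]. split.
  - apply Rle_trans with (Ex N p t (fun _ => 0)). unfold Ex. rewrite (sumR_ext _ _ (fun _ => 0)), sumR_zero. lra.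
    intros; ring. apply Ex_le. intros e He. pose proof (nk_bound N k e HN He Hk). pose proof (nk_le_N N l e He). nra.
  - apply Rle_trans with (Ex N p t (fun e => (2 * INR N) * gfun e)). apply Ex_le. intros e He.
    pose proof (nk_bound N k e HN He Hk). pose proof (nk_le_N N l e He). nra.
    rewrite Ex_scal. unfold Ex. fold Eg. lra.
Qed.

Lemma Ex_nkN : Ex N p t (nk N) = p t [N] /\ 1 - a <= Ex N p t (nk N) <= 1.
Proof.
  destruct Eg_a as [[E1 E2] E3]. split.
  - unfold Ex. rewrite (sumR_ext _ _ (fun e => if list_eqb e [N] then p t e * 1 else 0)).
    rewrite sumR_select_list'. ring. apply NoDup_parts. apply single_parts; auto.
    intros e He. rewrite nkN_val by auto. destruct (list_eqb e [N]); ring.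
  - split.
    + apply Rle_trans with (Ex N p t (fun e => 1 - gfun e)).
      unfold Ex. rewrite (sumR_ext _ _ (fun e => p t e * 1 - p t e * gfun e)), sumR_minus.
      rewrite mass_t. fold Eg. lra. intros; ring.
      apply Ex_le. intros e He. apply nkN_lower; auto.
    + rewrite <- mass_t. apply Ex_le. intros e He. rewrite nkN_val by auto.
      destruct (list_eqb e [N]); lra.
Qed.

Lemma Ex_nk_any l : 0 <= Ex N p t (nk l) <= 1 + 2 * a.
Proof.
  destruct (Nat.eq_dec l N) as [->|Hl].
  - destruct Ex_nkN as [_ [B1 B2]]. destruct Eg_a as [[E1 E2] E3].
    split; [|lra].
    apply Rle_trans with (Ex N p t (fun _ => 0)). unfold Ex. rewrite (sumR_ext _ _ (fun _ => 0)), sumR_zero. lra.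
    intros; ring. apply Ex_le. intros e He. apply nk_le_N with N; auto.
  - pose proof (Ex_nk l Hl). destruct Eg_a as [[E1 E2] E3]. lra.
Qed.

Lemma a_nonneg : 0 <= a.
Proof. unfold a. pose proof (exp_pos (- (INR N * t))). pose proof (pos_INR N). apply Rmult_le_pos; nra. Qed.

Lemma bound_E k : k <> N -> Rabs (Ex N p t (nk k) - 0) <= 4 * a + 4 * (a * a).
Proof.
  intros Hk. pose proof (Ex_nk k Hk). pose proof a_nonneg.
  rewrite Rminus_0_r, Rabs_right by lra. nra.
Qed.

Lemma bound_V k : k <> N -> Rabs (Var N p t (nk k) - 0) <= 4 * a + 4 * (a * a).
Proof.
  intros Hk. pose proof (Ex_nk k Hk). pose proof (Ex_nkl k k Hk). pose proof a_nonneg.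
  unfold Var. rewrite Rminus_0_r. apply Rabs_le. split; nra.
Qed.

Lemma Cov_sym f g : Cov N p t f g = Cov N p t g f.
Proof.
  unfold Cov. rewrite (Rmult_comm (Ex N p t f)). f_equal. unfold Ex. apply sumR_ext. intros; ring.
Qed.

Lemma bound_C k l : k <> l -> k <> N -> Rabs (Cov N p t (nk k) (nk l) - 0) <= 4 * a + 4 * (a * a).
Proof.
  intros Hkl Hk. pose proof (Ex_nk k Hk). pose proof (Ex_nkl k l Hk). pose proof (Ex_nk_any l).
  pose proof a_nonneg.
  unfold Cov. rewrite Rminus_0_r. apply Rabs_le. split; nra.
Qed.

Lemma bound_N : Rabs (Ex N p t (nk N) - 1) <= 4 * a + 4 * (a * a) /\
                Rabs (p t [N] - 1) <= 4 * a + 4 * (a * a).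
Proof.
  destruct Ex_nkN as [Eq [B1 B2]]. pose proof a_nonneg. rewrite <- Eq.
  split; apply Rabs_le; split; nra.
Qed.

End PerN.

Lemma cv_const c : Un_cv (fun _ => c) c.
Proof. intros eps He. exists 0%nat. intros. unfold Rdist. rewrite Rminus_diag, Rabs_R0. auto. Qed.

Theorem mainTheorem7 (p : nat -> R -> list nat -> R)
  (Hp : forall N : nat, is_CP_law psi_mult N (monomers N) (p N)) :
  forall t : R, 0 < t ->
    (forall k : nat,
       Un_cv (fun N => Ex N (p N) t (nk k)) 0 /\
       Un_cv (fun N => Var N (p N) t (nk k)) 0) /\
    (forall k l : nat, k <> l ->
       Un_cv (fun N => Cov N (p N) t (nk k) (nk l)) 0) /\
    Un_cv (fun N => Ex N (p N) t (nk N)) 1 /\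
    Un_cv (fun N => p N t [N]) 1.
Proof.
  intros t Ht.
  set (a := fun N => INR N * INR N * exp (- (INR N * t))).
  assert (Hb : Un_cv (fun N => 4 * a N + 4 * (a N * a N)) 0).
  { replace 0 with (4 * 0 + 4 * (0 * 0)) by ring.
    apply CV_plus; apply CV_mult; try apply cv_const; try apply CV_mult; apply a_cv; auto. }
  split; [|split; [|split]].
  - intros k. split.
    + apply (Un_cv_squeeze _ (fun N => 4 * a N + 4 * (a N * a N)) 0 (S k)); auto. intros N HN.
      apply (bound_E N (p N) (Hp N)); auto; lia.
    + apply (Un_cv_squeeze _ (fun N => 4 * a N + 4 * (a N * a N)) 0 (S k)); auto. intros N HN.
      apply (bound_V N (p N) (Hp N)); auto; lia.
  - intros k l Hkl. apply (Un_cv_squeeze _ (fun N => 4 * a N + 4 * (a N * a N)) 0 (S (k + l))); auto. intros N HN.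
    destruct (Nat.eq_dec k N) as [<-|Hk].
    + rewrite Cov_sym. apply (bound_C k (p k) (Hp k)); auto; lia.
    + apply (bound_C N (p N) (Hp N)); auto; lia.
  - apply (Un_cv_squeeze _ (fun N => 4 * a N + 4 * (a N * a N)) 1 1); auto. intros N HN.
    apply (bound_N N (p N) (Hp N)); auto.
  - apply (Un_cv_squeeze _ (fun N => 4 * a N + 4 * (a N * a N)) 1 1); auto. intros N HN.
    apply (bound_N N (p N) (Hp N)); auto.
Qed.
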